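(* There exists a sequence of functions $f_1, f_2, \ldots : \mathbb{R}^2 \to \{-1,1\}$ such that: (a) For every fixed depth $d \geq 1$ there is a constant $b > 1$ (depending only on $d$) such that for every $m$, every ReLU MLP classifier with input in $\mathbb{R}^2$, $d$ hidden layers and all hidden layers of width $w$ that computes $f_m$ exactly (i.e. outputs $f_m(x)$ for every $x \in \mathbb{R}^2$) satisfies $w \geq b^m$. (b) For every $m$ there is a ReLU MLP classifier with a number of parameters linear in $m$ that computes $f_m$ exactly; concretely, one with depth $m+2$ and every hidden layer of width at most $4$.
   Context: Let $\sigma(t) = \max\{0,t\}$ act elementwise. A ReLU MLP classifier with input in $\mathbb{R}^2$, $d$ hidden layers and hidden widths $w_1,\dots,w_d$ is a map $F:\mathbb{R}^2 \to \{-1,1\}$ of the form $h_0 = x$, $h_i = \sigma(A_i h_{i-1} + c_i)$ for $i=1,\dots,d$ (with $A_i \in \mathbb{R}^{w_i \times w_{i-1}}$, $w_0 = 2$, $c_i \in \mathbb{R}^{w_i}$), and $F(x) = 1$ if $v^\top h_d + v_0 > 0$ and $F(x) = -1$ otherwise, for some $v \in \mathbb{R}^{w_d}$, $v_0 \in \mathbb{R}$. Its depth is the number of hidden layers $d$; layers of smaller width are regarded as width-$w$ layers with some zero parameters. *)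

(* Defs.v *)
From HB Require Import structures.
From mathcomp Require Import all_boot all_order all_algebra.
From mathcomp Require Import Rstruct.
From Stdlib Require Import Reals.
Set Implicit Arguments. Unset Strict Implicit. Unset Printing Implicit Defensive.
Import Order.TTheory GRing.Theory Num.Theory.
Local Open Scope ring_scope.

Notation R := Rdefinitions.R.

(* Parameters of a ReLU MLP classifier R^2 -> {-1,1} all of whose hidden
   layers have width w (smaller layers are padded with zero parameters).
   W0,b0 : first hidden layer (A_1, c_1);
   Wh i, bh i : hidden layer i+2 (A_{i+2}, c_{i+2}), only i < d-1 are used;
   vout, v0 : output affine form. *)
Record mlp (w : nat) := MLP {
  W0 : 'M[R]_(w, 2);
  b0 : 'cV[R]_w;
  Wh : nat -> 'M[R]_w;
  bh : nat -> 'cV[R]_w;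
  vout : 'cV[R]_w;
  v0 : R }.

Definition relu_v (n : nat) (u : 'cV[R]_n) : 'cV[R]_n :=
  map_mx (fun t => Num.max 0 t) u.

Definition mlp_hidden (w d : nat) (N : mlp w) (x : 'cV[R]_2) : 'cV[R]_w :=
  foldl (fun h i => relu_v (Wh N i *m h + bh N i))
        (relu_v (W0 N *m x + b0 N)) (iota 0 d.-1).

Definition mlp_eval (w d : nat) (N : mlp w) (x : 'cV[R]_2) : int :=
  if 0 < ((vout N)^T *m mlp_hidden d N x) 0 0 + v0 N then 1 else -1.

(* Main.v *)
Require Import Defs.
From HB Require Import structures.
From mathcomp Require Import all_boot all_order all_algebra.
From mathcomp Require Import Rstruct.
From mathcomp Require Import ring lra zify.
Import Order.TTheory GRing.Theory Num.Theory.
Local Open Scope ring_scope.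
Set Implicit Arguments. Unset Strict Implicit. Unset Printing Implicit Defensive.

Definition aff (K : nat) (P : pred nat) (g : nat -> R) :=
  forall j, (j + 2 <= K)%N -> ~~ P j.+1 -> ~~ P j.+2 -> g j + g j.+2 = 2 * g j.+1.
Definition sc (g : nat -> R) (i : nat) : bool := (0 < g i.-1) != (0 < g i).
Definition cnt (K : nat) (P : pred nat) := #|[set i : 'I_K.+1 | P i]|.

Lemma aff_line K P g p q : aff K P g -> (q <= K)%N ->
  (forall k, (p < k <= q)%N -> ~~ P k) ->
  forall k, (p + k.+1 <= q)%N ->
   g (p + k)%N = g p + k%:R * (g p.+1 - g p) /\
   g (p + k.+1)%N = g p + k.+1%:R * (g p.+1 - g p).
Proof.
move=> ha hq hc; elim=> [|k IH] hk.
  rewrite addn0 addn1 mul0r mul1r addr0; split=> //; by rewrite addrC subrK.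
have [h1 h2] := IH ltac:(lia).
split; first by [].
have e := ha (p + k)%N ltac:(lia) (hc (p+k).+1 ltac:(lia)) (hc (p+k).+2 ltac:(lia)).
have -> : g (p + k.+2)%N = 2 * g (p + k).+1 - g (p + k).
  by rewrite -[in RHS]e !addnS; ring.
rewrite -addnS h2 h1 -[(k.+2)%:R]natr1 -[(k.+1)%:R]natr1; ring.
Qed.

Lemma no_two_sc K P g p q : aff K P g -> (p.+1 < q)%N -> (q <= K)%N ->
  (forall k, (p < k <= q)%N -> ~~ P k) -> sc g p.+1 -> sc g q -> False.
Proof.
move=> ha hpq hq hc; rewrite /sc /=.
have [h1 h2] := @aff_line K P g p q ha hq hc ((q - p).-1) ltac:(lia).
have e1 : (p + (q - p).-1.+1)%N = q by lia.
have e2 : (p + (q - p).-1)%N = q.-1 by lia.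
rewrite e1 in h2; rewrite e2 in h1; rewrite h1 h2.
have : (1 <= ((q - p).-1)%:R :> R) by rewrite ler1n; lia.
rewrite -natr1.
move: (((q - p).-1)%:R : R) => n hn.
move: (g p) (g p.+1) => a b; clear h1 h2 e1 e2 hc ha hpq hq.
case: (ltrP 0 a); case: (ltrP 0 b); case: (ltrP 0 (a + n * (b - a)));
  case: (ltrP 0 (a + (n + 1) * (b - a))) => //= *; nra.
Qed.

Lemma sc_count K P g : aff K P g ->
  (#|[set i : 'I_K.+1 | ~~ P i && sc g i]| <= (cnt K P).+1)%N.
Proof.
move=> ha.
set A := [set i : 'I_K.+1 | ~~ P i && sc g i].
pose cu (i : 'I_K.+1) := #|[set c : 'I_K.+1 | P c && (c <= i)%N]|.
have cub i : (cu i <= cnt K P)%N.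
  by apply: subset_leq_card; apply/subsetP=> c; rewrite !inE => /andP[].
pose f (i : 'I_K.+1) : 'I_(cnt K P).+1 := inord (cu i).
have finj : {in A &, injective f}.
  have key : forall i i' : 'I_K.+1, i \in A -> i' \in A -> (i < i')%N ->
      cu i = cu i' -> False.
    move=> i i'; rewrite !inE => /andP[Pi si] /andP[Pi' si'] lt e.
    have i0 : (0 < i)%N.
      by case: (i : nat) si => //; rewrite /sc /= eqxx.
    apply: (@no_two_sc K P g i.-1 i' ha); first by lia.
    - by rewrite -ltnS ltn_ord.
    - move=> k /andP[k1 k2].
      case: (ltngtP k i) => [|ki|->] //; first by lia.
      apply/negP=> Pk.
      have : (cu i < cu i')%N.
        apply: proper_card; apply/properP; split.
          apply/subsetP=> c; rewrite !inE => /andP[-> ci] /=; lia.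
        have kK : (k < K.+1)%N by move: (ltn_ord i'); lia.
        by exists (Ordinal kK); rewrite !inE /= Pk /= -?ltnNge; lia.
      by rewrite e ltnn.
    - by rewrite prednK.
    - by [].
  move=> i i' iA i'A /(congr1 val); rewrite /= !inordK ?ltnS ?cub // => e.
  case: (ltngtP i i') => [lt|lt|/val_inj //].
    by case: (key _ _ iA i'A lt e).
  by case: (key _ _ i'A iA lt (esym e)).
rewrite -(card_in_imset finj).
by rewrite -[X in (_ <= X)%N]card_ord; apply: max_card.
Qed.

Lemma aff_mono K (P Q : pred nat) g : (forall i, P i -> Q i) -> aff K P g -> aff K Q g.
Proof.
move=> PQ ha j hj q1 q2; apply: ha => //; apply/negP => /PQ; by apply/negP.
Qed.

Lemma aff_relu K P g : aff K P g ->
  aff K (fun i => P i || sc g i) (fun j => Num.max 0 (g j)).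
Proof.
move=> ha j hj; rewrite !negb_or /sc /= => /andP[p1 s1] /andP[p2 s2].
have e := ha j hj p1 p2.
move: s1 s2; rewrite !negbK => /eqP s1 /eqP s2.
case: (ltrP 0 (g j.+1)) => h.
- have h0 : 0 < g j by rewrite s1.
  have h2 : 0 < g j.+2 by rewrite -s2.
  by rewrite !max_r ?ltW.
- have h0 : g j <= 0 by rewrite leNgt s1 -leNgt.
  have h2 : g j.+2 <= 0 by rewrite leNgt -s2 -leNgt.
  by rewrite !max_l // mulr0 addr0.
Qed.

Lemma aff_lin K n w (A : 'M[R]_(w, n)) (H : nat -> 'cV[R]_n) P (c : R) r :
  (forall k, aff K P (fun j => H j k 0)) -> aff K P (fun j => (A *m H j) r 0 + c).
Proof.
move=> h j hj p1 p2; rewrite !mxE.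
have : \sum_k A r k * H j k 0 + \sum_k A r k * H j.+2 k 0 =
       2 * \sum_k A r k * H j.+1 k 0.
  rewrite -big_split mulr_sumr; apply: eq_bigr => k _.
  by rewrite mulrCA -(h k j hj p1 p2) mulrDr.
lra.
Qed.

Lemma card_bigcup_le (T : finType) n (B : 'I_n -> {set T}) :
  (#|\bigcup_(i < n) B i| <= \sum_(i < n) #|B i|)%N.
Proof.
elim: n B => [|n IH] B; first by rewrite !big_ord0 cards0.
rewrite !big_ord_recr /= cardsU.
apply: leq_trans (leq_subr _ _) _; rewrite leq_add2r; exact: IH.
Qed.

Lemma aff_ext K P (f g : nat -> R) : (forall j, f j = g j) -> aff K P f -> aff K P g.
Proof. by move=> e ha j hj p1 p2; rewrite -!e; apply: ha. Qed.

Lemma layer_step K n w (A : 'M[R]_(w, n)) (b : 'cV[R]_w) (H : nat -> 'cV[R]_n) P :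
  (forall k, aff K P (fun j => H j k 0)) ->
  exists Q : pred nat, (forall r, aff K Q (fun j => relu_v (A *m H j + b) r 0)) /\
    ((cnt K Q).+1 <= w.+1 * (cnt K P).+1)%N.
Proof.
move=> hH.
pose g r j := (A *m H j) r 0 + b r 0.
have ag r : aff K P (g r) by apply: aff_lin.
exists (fun i => P i || [exists r, sc (g r) i]); split.
  move=> r; apply: (@aff_ext _ _ (fun j => Num.max 0 (g r j))).
    by move=> j; rewrite /relu_v /g !mxE.
  apply: (@aff_mono K _ _ _ _ (@aff_relu K P (g r) (ag r))) => i /orP[->//|s].
  by apply/orP; right; apply/existsP; exists r.
pose nw r := [set i : 'I_K.+1 | ~~ P i && sc (g r) i].
have sub : [set i : 'I_K.+1 | P i || [exists r, sc (g r) i]] \subset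
           [set i : 'I_K.+1 | P i] :|: \bigcup_(r < w) nw r.
  apply/subsetP => i; rewrite !inE.
  case Pi: (P i) => //= /existsP[r sr].
  by apply/bigcupP; exists r => //; rewrite inE Pi sr.
have c1 := subset_leq_card sub.
have c2 : (#|[set i : 'I_K.+1 | P i] :|: \bigcup_(r < w) nw r| <=
           cnt K P + \sum_(r < w) #|nw r|)%N.
  rewrite cardsU; apply: leq_trans (leq_subr _ _) _.
  by rewrite leq_add2l card_bigcup_le.
have c3 : (\sum_(r < w) #|nw r| <= \sum_(r < w) (cnt K P).+1)%N.
  by apply: leq_sum => r _; apply: sc_count.
rewrite sum_nat_const card_ord in c3.
rewrite /cnt in c1 c2 c3 *.
nia.
Qed.

Definition xs (L j : nat) : 'cV[R]_2 :=
  \col_(i < 2) (if (i : nat) == 0%N then j%:R / L%:R else 0).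

Definition hid w (N : mlp w) (k : nat) (x : 'cV[R]_2) : 'cV[R]_w :=
  foldl (fun h i => relu_v (Wh N i *m h + bh N i))
        (relu_v (W0 N *m x + b0 N)) (iota 0 k).

Lemma hidS w (N : mlp w) k x :
  hid N k.+1 x = relu_v (Wh N k *m hid N k x + bh N k).
Proof.

rewrite /hid; have -> : iota 0%N k.+1 = iota 0%N k ++ [:: k] by rewrite -addn1 iotaD.
by rewrite foldl_cat.
Qed.

Lemma hid0 w (N : mlp w) x : hid N 0 x = relu_v (W0 N *m x + b0 N).
Proof. by []. Qed.

Lemma xs_aff K L k : aff K pred0 (fun j => xs L j k 0).
Proof.
move=> j _ _ _; rewrite !mxE; case: ifP => _; last by rewrite mulr0 addr0.
have e2 : (j.+2)%:R = j%:R + 2 :> R by rewrite -addn2 natrD.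
have e1 : (j.+1)%:R = j%:R + 1 :> R by rewrite -addn1 natrD.
rewrite e2 e1; ring.
Qed.

Lemma cnt0 K : cnt K pred0 = 0%N.
Proof. by rewrite /cnt; apply/eqP; rewrite cards_eq0; apply/eqP/setP => i; rewrite !inE. Qed.

Lemma hid_inv K L w (N : mlp w) k : exists P : pred nat,
  (forall r, aff K P (fun j => hid N k (xs L j) r 0)) /\
  ((cnt K P).+1 <= w.+1 ^ k.+1)%N.
Proof.
elim: k => [|k [P [hP cP]]].
  have [Q [hQ cQ]] := @layer_step K 2 w (W0 N) (b0 N) (xs L) pred0 (@xs_aff K L).
  by exists Q; split => //; rewrite cnt0 muln1 in cQ; rewrite expn1.
have [Q [hQ cQ]] := @layer_step K w w (Wh N k) (bh N k) (fun j => hid N k (xs L j)) P hP.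
exists Q; split.
  by move=> r; apply: aff_ext (hQ r) => j; rewrite hidS.
apply: leq_trans cQ _; rewrite [X in (_ <= X)%N]expnS leq_mul2l; apply/orP; by right.
Qed.

Definition out d w (N : mlp w) L j :=
  ((vout N)^T *m mlp_hidden d N (xs L j)) 0 0 + v0 N.

Lemma lower K L d w (N : mlp w) : (1 <= d)%N ->
  (forall j, (j <= K)%N -> (0 < out d N L j) = odd j) -> (K < 2 * w.+1 ^ d)%N.
Proof.
move=> d1 ho.
have [P [hP cP]] := hid_inv K L N d.-1.
rewrite prednK // in cP.
have ao : aff K P (out d N L).
  by apply: (@aff_lin K w 1 ((vout N)^T) (fun j => hid N d.-1 (xs L j)) P (v0 N) 0).
have sc1 := sc_count ao.
set B := [set i : 'I_K.+1 | ~~ P i && sc (out d N L) i] in sc1.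
have sub : [set~ (ord0 : 'I_K.+1)] \subset [set i : 'I_K.+1 | P i] :|: B.
  apply/subsetP => i; rewrite !inE; case Pi: (P i) => //= i0.
  rewrite /sc; have iK := ltn_ord i.
  have ip : (0 < i)%N by rewrite lt0n; move: i0; apply: contra => /eqP e; apply/eqP/val_inj.
  rewrite !ho; [|lia|lia].
  by rewrite -(prednK ip) /=; case: (odd _).
have := subset_leq_card sub; rewrite cardsC1 card_ord /= cardsU.
rewrite /cnt in cP sc1; lia.
Qed.

Definition mono (g : nat -> R) :=
  (forall j, g j <= g j.+1) \/ (forall j, g j.+1 <= g j).

Lemma mono_aff g a c : mono g -> mono (fun j => a * g j + c).
Proof.
move=> [h|h]; case: (lerP 0 a) => ha.
- by left => j; have := h j; nra.
- by right => j; have := h j; nra.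
- by right => j; have := h j; nra.
- by left => j; have := h j; nra.
Qed.

Lemma max_mono (x y : R) : x <= y -> Num.max 0 x <= Num.max 0 y.
Proof.
move=> xy; case: (lerP x 0) => hx; case: (lerP y 0) => hy; lra.
Qed.

Lemma mono_relu g : mono g -> mono (fun j => Num.max 0 (g j)).
Proof. by move=> [h|h]; [left|right] => j; apply: max_mono. Qed.

Lemma mono_ext f g : (forall j, f j = g j) -> mono f -> mono g.
Proof. by move=> e [h|h]; [left|right] => j; rewrite -!e. Qed.

Lemma hid1_mono L (N : mlp 1) k : mono (fun j => hid N k (xs L j) 0 0).
Proof.
elim: k => [|k IH].
  apply: (@mono_ext (fun j => Num.max 0 (W0 N 0 0 * (j%:R / L%:R) + b0 N 0 0))).
    move=> j; rewrite hid0 /relu_v !mxE !big_ord_recr big_ord0 /= !mxE /=.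
    have -> : widen_ord (leqnSn 1) ord_max = 0 :> 'I_2 by apply/val_inj.
    by rewrite mulr0 addr0 add0r.
  apply: mono_relu; apply: mono_aff; left => j.
  apply: ler_wpM2r; first by rewrite invr_ge0 ler0n.
  by rewrite ler_nat.
apply: (@mono_ext (fun j => Num.max 0 (Wh N k 0 0 * hid N k (xs L j) 0 0 + bh N k 0 0))).
  by move=> j; rewrite hidS /relu_v !mxE big_ord1.
by apply: mono_relu; apply: mono_aff.
Qed.

Lemma width1 L d (N : mlp 1) :
  (forall j, (j <= 2)%N -> (0 < out d N L j) = odd j) -> False.
Proof.
move=> ho.
have m : mono (out d N L).
  apply: (@mono_ext (fun j => vout N 0 0 * hid N d.-1 (xs L j) 0 0 + v0 N)).
    by move=> j; rewrite /out !mxE big_ord1 mxE.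
  by apply: mono_aff; apply: hid1_mono.
have h0 := ho 0%N isT; have h1 := ho 1%N isT; have h2 := ho 2%N isT.
move: h0 h1 h2 => /= h0 h1 h2.
case: m => h.
- have := h 1%N; move: h1 h2; case: ltrP => // a _; case: ltrP => // b _.
  by rewrite leNgt (le_lt_trans b a).
- have := h 0%N; move: h0 h1; case: ltrP => // a _; case: ltrP => // b _.
  by rewrite leNgt (le_lt_trans a b).
Qed.

Definition cc : 'cV[R]_4 := \col_(i < 4) ((i : nat)%:R / 4).
Definition av : 'cV[R]_4 :=
  \col_(i < 4) (if (i : nat) == 0%N then 4 else if (i : nat) == 2%N then 8 else -8).
Definition NN : mlp 4 :=
  @MLP 4 (\matrix_(i < 4, j < 2) (if (j : nat) == 0%N then 1 else 0)) (- cc)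
     (fun _ => \matrix_(i < 4, j < 4) av j 0) (fun _ => - cc) av (- 2^-1).

Definition phi (t : R) : 'cV[R]_4 := \col_(i < 4) Num.max 0 (t - (i : nat)%:R / 4).
Definition S (t : R) : R := (av^T *m phi t) 0 0.

Lemma hidNN0 x : hid NN 0 x = phi (x 0 0).
Proof.
apply/matrixP => i j; rewrite hid0 /relu_v /phi !mxE !big_ord_recr big_ord0 /= !mxE /=.
have -> : widen_ord (leqnSn 1) ord_max = 0 :> 'I_2 by apply/val_inj.
by rewrite (ord1 j) mul0r addr0 add0r mul1r.
Qed.

Lemma hidNNS k x t : hid NN k x = phi t -> hid NN k.+1 x = phi (S t).
Proof.
move=> e; rewrite hidS e; apply/matrixP => i j; rewrite /relu_v /phi /S !mxE /=.
congr (Num.max 0 (_ + _)); apply: eq_bigr => l _; by rewrite !mxE.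
Qed.

Lemma hidNN k x : hid NN k x = phi (iter k S (x 0 0)).
Proof. elim: k => [|k IH]; first exact: hidNN0. by rewrite (hidNNS IH). Qed.

Lemma evalNN d x : (1 <= d)%N ->
  mlp_eval d NN x = if 0 < iter d S (x 0 0) - 2^-1 then 1 else -1.
Proof.
move=> d1; rewrite /mlp_eval (_ : mlp_hidden d NN x = hid NN d.-1 x) // hidNN.
by rewrite -(prednK d1) iterS.
Qed.

Lemma SE t : S t = 4 * Num.max 0 t - 8 * Num.max 0 (t - 1/4)
   + 8 * Num.max 0 (t - 2/4) - 8 * Num.max 0 (t - 3/4).
Proof.
rewrite /S !mxE !big_ord_recr big_ord0 /= !mxE /=.
by rewrite mul0r subr0 add0r; lra.
Qed.

Lemma S_pw t :
  [/\ 0 <= t <= 1/4 -> S t = 4 * t,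
      1/4 <= t <= 2/4 -> S t = 2 - 4 * t,
      2/4 <= t <= 3/4 -> S t = 4 * t - 2 &
      3/4 <= t <= 1 -> S t = 4 - 4 * t].
Proof.
rewrite SE; case: (ler0P t); case: (ler0P (t - 1/4)); case: (ler0P (t - 2/4));
  case: (ler0P (t - 3/4)) => *; split => /andP[*]; lra.
Qed.

Lemma S_eval n j : (j <= 4 ^ n.+1)%N -> exists j', (j' <= 4 ^ n)%N /\
  odd j' = odd j /\ S (j%:R / (4 ^ n.+1)%:R) = j'%:R / (4 ^ n)%:R.
Proof.
rewrite expnS => hj.
have q0 : (0 < 4 ^ n)%N by rewrite expn_gt0.
have ev : odd (4 ^ n * 2) = false by rewrite oddM andbF.
have ev4 : odd (4 * 4 ^ n) = false by rewrite oddM.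
move: q0 ev ev4 hj; move: (4 ^ n)%N => q q0 ev ev4 hj.
have Qp : 0 < q%:R :> R by rewrite ltr0n.
have [p1 p2 p3 p4] := S_pw (j%:R / (4 * q)%:R).
have ht : j%:R / (4 * q)%:R * (4 * q%:R) = j%:R :> R.
  by rewrite natrM; field; rewrite (gt_eqF Qp).
move: ht; move: (j%:R / (4 * q)%:R) p1 p2 p3 p4 => t p1 p2 p3 p4 ht.
have hJ0 : 0 <= j%:R :> R by rewrite ler0n.
case: (leqP j q) => h1.
  exists j; do 2 split => //.
  have hJ : j%:R <= q%:R :> R by rewrite ler_nat.
  rewrite p1; [|apply/andP; split; nra].
  by rewrite -ht; field; rewrite (gt_eqF Qp).
case: (leqP j (q * 2)) => h2.
  exists (q * 2 - j)%N; split; first lia.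
  split; first by rewrite oddB ?ev // ltnW.
  have hJ : q%:R <= j%:R :> R by rewrite ler_nat ltnW.
  have hJ2 : j%:R <= (q * 2)%:R :> R by rewrite ler_nat.
  rewrite natrM in hJ2.
  rewrite p2. 2:{ apply/andP; split. nra. nra. }
  by rewrite natrB // natrM -ht; field; rewrite (gt_eqF Qp).
case: (leqP j (q * 3)) => h3.
  exists (j - q * 2)%N; split; first lia.
  split; first by rewrite (oddB (ltnW h2)) ev addbF.
  have hJ : (q * 2)%:R <= j%:R :> R by rewrite ler_nat ltnW.
  have hJ2 : j%:R <= (q * 3)%:R :> R by rewrite ler_nat.
  rewrite natrM in hJ hJ2.
  rewrite p3. 2:{ apply/andP; split. nra. nra. }
  by rewrite (natrB _ (ltnW h2)) natrM -ht; field; rewrite (gt_eqF Qp).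
exists (4 * q - j)%N; split; first lia.
split; first by rewrite oddB ?ev4.
have hJ : (q * 3)%:R <= j%:R :> R by rewrite ler_nat ltnW.
have hJ2 : j%:R <= (4 * q)%:R :> R by rewrite ler_nat.
rewrite natrM in hJ hJ2.
rewrite p4. 2:{ apply/andP; split. nra. nra. }
by rewrite natrB // natrM -ht; field; rewrite (gt_eqF Qp).
Qed.

Lemma iter_eval n j : (j <= 4 ^ n)%N -> iter n S (j%:R / (4 ^ n)%:R) = (odd j)%:R.
Proof.
elim: n j => [|n IH] j hj.
  rewrite expn0 in hj; rewrite expn0 /= divr1.
  by case: j hj => [|[|]].
have [j' [hj' [ho he]]] := S_eval hj.
by rewrite iterSr he IH // ho.
Qed.

Lemma pow_bound (u : R) n k : 0 < u -> n%:R * u = 1 -> (k <= n)%N ->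
  (1 + u / 2) ^+ k <= 1 + k%:R * u.
Proof.
move=> u0 nu; elim: k => [|k IH] hk; first by rewrite expr0 mul0r addr0.
have IH' := IH (ltnW hk).
have ku : k%:R * u <= 1.
  rewrite -[X in _ <= X]nu; apply: ler_wpM2r; first exact: ltW.
  by rewrite ler_nat ltnW.
have X0 : 0 <= (1 + u / 2) ^+ k by apply: exprn_ge0; lra.
rewrite exprS -natr1.
have h1 : (1 + u / 2) * (1 + u / 2) ^+ k <= (1 + u / 2) * (1 + k%:R * u).
  by apply: ler_wpM2l => //; lra.
have h2 : (k%:R * u) * u <= u by nra.
apply: (le_trans h1).
have e : (1 + u / 2) * (1 + k%:R * u) = 1 + k%:R * u + u / 2 + (k%:R * u) * u / 2 by ring.
rewrite e; lra.
Qed.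

Lemma final_arith d m w : (1 <= d)%N -> (1 <= m)%N -> (2 <= w)%N ->
  (4 ^ (m + 2) < 2 * w.+1 ^ d)%N ->
  (1 + ((2 * d)%:R)^-1 / 2) ^+ m <= w%:R :> R.
Proof.
move=> d1 m1 w2 hb.
set b := 1 + ((2 * d)%:R)^-1 / 2.
have u0 : 0 < ((2 * d)%:R)^-1 :> R by rewrite invr_gt0 ltr0n; lia.
have hb2 : b ^+ (2 * d) <= 2.
  have nu : (2 * d)%:R * ((2 * d)%:R)^-1 = 1 :> R.
    by rewrite mulfV // pnatr_eq0 -lt0n; lia.
  have h := @pow_bound ((2 * d)%:R)^-1 (2 * d) (2 * d) u0 nu (leqnn _).
  by rewrite /b; apply: (le_trans h); rewrite nu; lra.
have b0 : 0 <= b by rewrite /b; lra.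
have n1 : (w.+1 ^ d <= (w ^ 2) ^ d)%N by rewrite leq_exp2r //; nia.
have n2 : (4 ^ m < (w ^ 2) ^ d)%N.
  move: hb; rewrite expnD => hb.
  have : (4 ^ m * 4 ^ 2 < 2 * (w ^ 2) ^ d)%N.
    by apply: (leq_trans hb); rewrite leq_mul2l n1 orbT.
  rewrite (_ : (4 ^ 2 = 16)%N) //; lia.
have r2 : 4 ^+ m < (w%:R ^+ 2) ^+ d :> R.
  by move: n2; rewrite -(ltr_nat R) !natrX.
rewrite -exprM in r2.
have r3 : (b ^+ m) ^+ (2 * d) <= 4 ^+ m.
  rewrite -exprM mulnC exprM.
  apply: (le_trans (y := 2 ^+ m)).
    rewrite ler_pXn2r ?nnegrE //; try lia; try lra.
    exact: exprn_ge0.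
  rewrite ler_pXn2r ?nnegrE //; try lia; lra.
have r4 : (b ^+ m) ^+ (2 * d) < w%:R ^+ (2 * d) := le_lt_trans r3 r2.
rewrite ltr_pXn2r ?nnegrE ?exprn_ge0 ?ler0n // in r4; last by lia.
exact: ltW.
Qed.

Theorem theorem1 :
  exists f : nat -> 'cV[R]_2 -> int,
    (forall m x, f m x = 1 \/ f m x = -1) /\
    (forall d : nat, (1 <= d)%N ->
       exists b : R, 1 < b /\
         forall m : nat, (1 <= m)%N ->
         forall (w : nat) (N : mlp w),
           (forall x, mlp_eval d N x = f m x) -> b ^+ m <= w%:R) /\
    (forall m : nat, (1 <= m)%N ->
       exists N : mlp 4, forall x, mlp_eval (m + 2) N x = f m x).
Proof.
exists (fun m x => mlp_eval (m + 2) NN x); split.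
  by move=> m x; rewrite /mlp_eval; case: ifP; [left|right].
split; last by move=> m _; exists NN.
move=> d d1; exists (1 + ((2 * d)%:R)^-1 / 2); split.
  have u0 : 0 < ((2 * d)%:R)^-1 :> R by rewrite invr_gt0 ltr0n; lia.
  lra.
move=> m m1 w N hN.
have ho : forall j, (j <= 4 ^ (m + 2))%N -> (0 < out d N (4 ^ (m + 2)) j) = odd j.
  move=> j hj.
  have e : (if 0 < out d N (4 ^ (m + 2)) j then 1 else -1 : int) =
           mlp_eval (m + 2) NN (xs (4 ^ (m + 2)) j) := hN _.
  rewrite evalNN in e; last by lia.
  rewrite mxE /= iter_eval // in e.
  move: e; case: (odd j); case: (0 < out _ _ _ _) => //=.
  - have -> : 0 < 1 - 2^-1 :> R by lra.
    by [].
  - have -> : 0 < 0 - 2^-1 :> R = false by apply/negbTE; rewrite -leNgt; lra.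
    by [].
have K16 : (16 <= 4 ^ (m + 2))%N.
  by rewrite expnD (_ : (4 ^ 2 = 16)%N) // leq_pmull // expn_gt0.
case: w N hN ho => [|[|w]] N hN ho.
- have := lower d1 ho; rewrite exp1n; lia.
- exfalso; apply: (@width1 (4 ^ (m + 2)) d N) => j hj; apply: ho; lia.
- apply: final_arith => //.
  exact: lower d1 ho.
Qed.
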